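(* Let $A, A_1,\dots,A_k$ ($k\ge2$) be nonempty subsets of $X$ (or of $X^*$). Then \[ \Big[\overline{\operatorname{co}}\big(A\cup A_1\cup\cdots\cup A_k\big)\Big]_\infty=\Big[\overline{\operatorname{co}}\big(A\cup(A_1+\cdots+A_k)\big)\Big]_\infty . \]
   Context: $X$ is a real separated locally convex space with dual $X^*$ carrying the weak$^*$ topology (closures in $X^*$ are weak$^*$-closures). $\overline{\operatorname{co}}$ denotes the closed convex hull, and $A_1+\cdots+A_k$ the Minkowski sum. For a nonempty closed convex set $C$, its recession cone is $C_\infty:=\{y:\ z+\lambda y\in C\text{ for some } z\in C \text{ and all }\lambda\ge 0\}$. *)

(* Defs.v *)
From HB Require Import structures.
From mathcomp Require Import all_boot all_order all_algebra.
From mathcomp Require Import all_classical all_reals all_analysis.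
Set Implicit Arguments. Unset Strict Implicit. Unset Printing Implicit Defensive.
Import Order.TTheory GRing.Theory Num.Theory.
Local Open Scope classical_set_scope.
Local Open Scope ring_scope.

Definition conv_hull (R : realType) (E : tvsType R) (A : set E) : set E :=
  [set x | forall C : set E, convex_set C -> A `<=` C -> C x].

Definition clconv (R : realType) (E : tvsType R) (A : set E) : set E :=
  closure (conv_hull A).

Definition recession_cone (R : realType) (E : tvsType R) (C : set E) : set E :=
  [set y | exists2 z, C z & forall l : R, 0 <= l -> C (z + l *: y)].

Definition minkowski_sum (R : realType) (E : tvsType R) (k : nat)
    (A : 'I_k -> set E) : set E :=
  [set x | exists a : 'I_k -> E, (forall i, A i (a i)) /\ x = \sum_(i < k) a i].

(* Main.v *)
Require Import Defs.
From HB Require Import structures.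
From mathcomp Require Import all_boot all_order all_algebra.
From mathcomp Require Import all_classical all_reals all_analysis.
From mathcomp Require Import ring lra.
Import Order.TTheory GRing.Theory Num.Theory.
Local Open Scope classical_set_scope.
Local Open Scope ring_scope.

Section S.
Context (R : realType) (E : tvsType R).

Lemma convP (C : set E) x y t : convex_set C -> C x -> C y -> 0 <= t -> t <= 1 ->
  C (t *: x + (1 - t) *: y).
Proof.
move=> cC Cx Cy t0 t1.
have := cC x y (Itv01 t0 t1); rewrite !inE => /(_ Cx Cy).
by [].
Qed.

Lemma conv_hull_convex (A : set E) : convex_set (conv_hull A).
Proof.
move=> x y l; rewrite !inE => Hx Hy C cC AC.
have := cC x y l; rewrite !inE; apply; [exact: Hx|exact: Hy].
Qed.

Lemma sub_conv_hull (A : set E) : A `<=` conv_hull A.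
Proof. by move=> x Ax C _; apply. Qed.

Lemma conv_hull_min (A C : set E) : convex_set C -> A `<=` C -> conv_hull A `<=` C.
Proof. by move=> cC AC x; apply. Qed.

Lemma nbhs_split (U : set E) : nbhs (0:E) U ->
  exists2 V : set E, nbhs (0:E) V & forall a b, V a -> V b -> U (a + b).
Proof.
move=> U0; have /= := @add_continuous E (0, 0) U.
rewrite addr0 => /(_ U0) [] /= [B1 B2] [/= B10 B20] BU.
exists (B1 `&` B2); first exact: filterI.
by move=> a b [Ha _] [_ Hb]; apply: (BU (a, b)).
Qed.

Lemma nbhs_scale0 (v : E) (U : set E) : nbhs (0:E) U ->
  exists2 d : R, 0 < d & forall t : R, `|t| < d -> U (t *: v).
Proof.
move=> U0; have /= := @scale_continuous R E (0, v) U.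
rewrite scale0r => /(_ U0) [] /= [B1 B2] [/= B10 B20] BU.
move: B10 => /nbhs_ballP [d /= d0 Hd].
exists d => // t td; apply: (BU (t, v)); split => //=; last exact: nbhs_singleton.
by apply: Hd; rewrite /ball /= sub0r normrN.
Qed.

Lemma nbhs_box m (f : 'I_m -> E) (U : set E) : nbhs (0:E) U ->
  exists2 d : R, 0 < d & forall t (a : 'I_m -> R), 0 <= t -> t < d ->
    (forall i, 0 <= a i <= 1) -> U (t *: \sum_(i < m) a i *: f i).
Proof.
elim: m f U => [|m IH] f U U0.
  exists 1 => // t a _ _ _; rewrite big_ord0 scaler0; exact: nbhs_singleton.
have [V V0 VU] := nbhs_split _ U0.
have [d1 d10 H1] := IH (fun i => f (widen_ord (leqnSn m) i)) V V0.
have [d2 d20 H2] := nbhs_scale0 (f ord_max) _ V0.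
exists (Num.min d1 d2); first by rewrite lt_min d10 d20.
move=> t a t0; rewrite lt_min => /andP [td1 td2] a01.
rewrite big_ord_recr /= scalerDr scalerA; apply: VU.
  by apply: (H1 t (fun i => a (widen_ord (leqnSn m) i))) => // i; exact: a01.
apply: H2; rewrite normrM ger0_norm //.
have /andP [a0 a1] := a01 ord_max.
rewrite ger0_norm //; apply: le_lt_trans td2.
by rewrite -[leRHS]mulr1 ler_wpM2l.
Qed.
Lemma rec_sub (C D : set E) (p : E) (mu : R) m (f : 'I_m -> E) :
  convex_set D -> D p -> 0 < mu ->
  (forall x, C x -> exists2 b, D b & exists2 a : 'I_m -> R,
      (forall i, 0 <= a i <= 1) & mu *: x = b + \sum_(i < m) a i *: f i) ->
  recession_cone (closure C) `<=` recession_cone (closure D).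
Proof.
move=> cD Dp mu0 H y [z Cz Hz]; exists p; first exact: subset_closure.
move=> l l0 N Nq.
set q := p + l *: y in Nq.
have N'0 : nbhs (0:E) (fun u => N (q + u)).
  have /= := @add_continuous E (q, 0) N.
  rewrite addr0 => /(_ Nq) [] /= [B1 B2] [/= B10 B20] BU.
  apply: filterS B20 => u Bu; apply: (BU (q, u)); split => //=.
  exact: nbhs_singleton.
have [V1 V10 V1N] := nbhs_split _ N'0.
have [V V0 VV1] := nbhs_split _ V10.
have [d1 d10 H1] := @nbhs_box m (fun i => - f i) _ V10.
have [d2 d20 H2] := nbhs_scale0 (mu *: z - p) _ V0.
pose t := Num.min (Num.min d1 d2) 1 / 2.
have t0 : 0 < t by rewrite divr_gt0 // !lt_min d10 d20 ltr01.
have tm : t < Num.min (Num.min d1 d2) 1.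
  by rewrite /t ltr_pdivrMr // ltr_pMr ?ltr1n // !lt_min d10 d20 ltr01.
move: tm; rewrite !lt_min => /andP [/andP [td1 td2] t1].
have tmu0 : t * mu != 0 by rewrite mulf_neq0 // gt_eqF.
pose w := z + (l / (t * mu)) *: y.
have Cw : closure C w by apply: Hz; rewrite divr_ge0 // mulr_ge0 // ltW.
have Mw : nbhs w (+%R w @` ( *:%R (t * mu)^-1 @` V)).
  by apply: nbhsT; apply: nbhs0Z => //; rewrite invr_eq0.
have [x [Cx [u [v Vv vu] wx]]] := Cw _ Mw.
have [b Db [a a01 ex]] := H _ Cx.
exists (t *: b + (1 - t) *: p); split.
  by apply: convP => //; [exact: ltW | exact: ltW].
have -> : t *: b + (1 - t) *: p =
   q + ((t *: (mu *: z - p) + v) + t *: \sum_(i < m) a i *: - f i).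
  have eb : b = mu *: x - \sum_(i < m) a i *: f i by rewrite ex addrK.
  rewrite eb -wx -vu /= /w /q.
  have -> : \sum_(i < m) a i *: - f i = - \sum_(i < m) a i *: f i.
    by rewrite -sumrN; apply: eq_bigr => i _; rewrite scalerN.
  rewrite !scalerDr !scalerN !scalerA.
  have -> : t * (mu * (l / (t * mu))) = l.
    by field; rewrite ?gt_eqF.
  rewrite divff // scale1r scalerBl scale1r !addrA.
  by rewrite [LHS](ACl (5*2*1*6*3*4)%AC).
apply: V1N; last exact: H1 (ltW t0) td1 a01.
apply: VV1 => //; apply: H2; rewrite gtr0_norm //.
Qed.
Lemma convex_setP (C : set E) :
  (forall x y t, 0 <= t -> t <= 1 -> C x -> C y -> C (t *: x + (1 - t) *: y)) ->
  convex_set C.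
Proof.
move=> H x y l; rewrite !inE => Cx Cy.
exact: (H x y l%:num (ge0 l) (le1 l) Cx Cy).
Qed.

Definition Tset (D : set E) (mu : R) m (f : 'I_m -> E) : set E :=
  [set x | exists2 b, D b & exists2 a : 'I_m -> R,
      (forall i, 0 <= a i <= 1) & mu *: x = b + \sum_(i < m) a i *: f i].

Lemma Tset_convex D mu m f : convex_set D -> convex_set (@Tset D mu m f).
Proof.
move=> cD; apply: convex_setP => x y t t0 t1 [b1 Db1 [a1 a1b e1]] [b2 Db2 [a2 a2b e2]].
exists (t *: b1 + (1 - t) *: b2); first exact: convP.
exists (fun i => t * a1 i + (1 - t) * a2 i).
  move=> i; have /andP [h1 h2] := a1b i; have /andP [h3 h4] := a2b i.
  apply/andP; split; nra.
have sc : forall (c : R) (u : E), mu *: (c *: u) = c *: (mu *: u).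
  by move=> c u; rewrite !scalerA mulrC.
rewrite scalerDr !sc e1 e2.
have -> : \sum_(i < m) (t * a1 i + (1 - t) * a2 i) *: f i =
    t *: \sum_(i < m) a1 i *: f i + (1 - t) *: \sum_(i < m) a2 i *: f i.
  rewrite !scaler_sumr -big_split /=; apply: eq_bigr => i _.
  by rewrite scalerDl !scalerA.
rewrite !scalerDr !addrA.
by rewrite [LHS](ACl (1*3*2*4)%AC).
Qed.

Lemma conv_mean (D : set E) k (a : 'I_k -> E) : (0 < k)%N -> convex_set D ->
  (forall i, D (a i)) -> D ((k%:R)^-1 *: \sum_(i < k) a i).
Proof.
case: k a => // n a _ cD; elim: n a => [|n IH] a Da.
  by rewrite big_ord1 invr1 scale1r.
rewrite big_ord_recr /=.
have n0 : (n.+1%:R : R) != 0 by rewrite pnatr_eq0.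
have n0' : (n.+2%:R : R) != 0 by rewrite pnatr_eq0.
have := @convP D _ _ (n.+1%:R / n.+2%:R) cD
  (IH (fun i => a (widen_ord (leqnSn n.+1) i)) (fun i => Da _)) (Da ord_max).
rewrite scalerA.
have -> : n.+1%:R / n.+2%:R * (n.+1%:R)^-1 = (n.+2%:R : R)^-1.
  by rewrite mulrAC divff // mul1r.
have -> : 1 - n.+1%:R / n.+2%:R = (n.+2%:R : R)^-1.
  move: n0'; rewrite -natr1 => n0'; by field.
rewrite -scalerDr; apply.
- by rewrite divr_ge0.
- by rewrite ler_pdivrMr ?ltr0n // mul1r ler_nat.
Qed.
End S.

Theorem lemma2 (R : realType) (E : tvsType R) (hE : hausdorff_space E)
    (k : nat) (hk : (2 <= k)%N) (A : set E) (As : 'I_k -> set E)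
    (hA : A !=set0) (hAs : forall i, As i !=set0) :
  recession_cone (clconv (A `|` \bigcup_(i in [set: 'I_k]) As i)) =
  recession_cone (clconv (A `|` minkowski_sum As)).
Proof.
have k0 : (0 < k)%N by apply: leq_trans hk.
have [p Ap] := hA.
have [pp Hpp] := choice (fun i => hAs i).
set B := A `|` _. set B' := A `|` _.
pose s := \sum_(i < k) pp i.
rewrite /clconv; apply/seteqP; split.
- apply: (@rec_sub R E _ _ p 1 k (fun i => pp i - s)).
  + exact: conv_hull_convex.
  + by apply: sub_conv_hull; left.
  + exact: ltr01.
  move=> x Cx.
  have : @Tset R E (conv_hull B') 1 k (fun i => pp i - s) x.
    apply: (@conv_hull_min R E B _ (@Tset_convex R E _ 1 k (fun i => pp i - s) (@conv_hull_convex R E B'))) Cx.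
    move=> y [Ay|[i _ Ay]].
    + exists y; first by apply: sub_conv_hull; left.
      exists (fun _ => 0); first by move=> _; rewrite lexx ler01.
      by rewrite big1 ?addr0 ?scale1r // => i _; rewrite scale0r.
    + exists (y + (s - pp i)).
        apply: sub_conv_hull; right.
        exists (fun j => if j == i then y else pp j); split.
          by move=> j; case: eqP => [->|].
        rewrite (bigD1 i) //= eqxx; congr (_ + _).
        rewrite /s (bigD1 i) //= [pp i + _]addrC addrK.
        by apply: eq_bigr => j /negPf ->.
      exists (fun j => (j == i)%:R).
        by move=> j; case: (j == i); rewrite ?lexx ?ler01.
      rewrite (bigD1 i) //= eqxx scale1r big1 ?addr0; last first.
        by move=> j /negPf ->; rewrite scale0r.
      by rewrite scale1r -addrA -[pp i - s]opprB subrr addr0.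
  move=> [b Db [a ab e]]; exists b => //; exists a => //.
- have kR : (0 : R) < k%:R by rewrite ltr0n.
  have ki0 : (0 : R) <= k%:R^-1 by rewrite invr_ge0 ltW.
  have ki1 : (k%:R : R)^-1 <= 1 by rewrite invf_le1 // ler1n.
  apply: (@rec_sub R E _ _ p (k%:R^-1) 1 (fun _ => - p)).
  + exact: conv_hull_convex.
  + by apply: sub_conv_hull; left.
  + by rewrite invr_gt0.
  move=> x Cx.
  have : @Tset R E (conv_hull B) (k%:R^-1) 1 (fun _ => - p) x.
    apply: (@conv_hull_min R E B' _ (@Tset_convex R E _ (k%:R^-1) 1 (fun _ => - p) (@conv_hull_convex R E B))) Cx.
    move=> y [Ay|[a [Ha ->]]].
    + exists (k%:R^-1 *: y + (1 - k%:R^-1) *: p).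
        apply: convP => //; first exact: conv_hull_convex.
        * by apply: sub_conv_hull; left.
        * by apply: sub_conv_hull; left.
      exists (fun _ => 1 - k%:R^-1); first by move=> _; apply/andP; split; lra.
      by rewrite big_ord1 scalerN addrK.
    + exists (k%:R^-1 *: \sum_(i < k) a i).
        apply: conv_mean => //; first exact: conv_hull_convex.
        by move=> i; apply: sub_conv_hull; right; exists i.
      exists (fun _ => 0); first by move=> _; rewrite lexx ler01.
      by rewrite big_ord1 scale0r addr0.
  move=> [b Db [a ab e]]; exists b => //; exists a => //.
Qed.
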